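(* Let $\Omega\subset(\mathbb R+i\mathbb T)^s$ be a finite set of $N=\#\Omega$ frequencies, $\mathbb T=\mathbb R/2\pi\mathbb Z$, and let $f(x)=\sum_{\omega\in\Omega}f_\omega e^{\omega^Tx}$ with all $f_\omega\in\mathbb C\setminus\{0\}$. Let $X_\Omega=\{x_\omega=(e^{\omega_1},\dots,e^{\omega_s}):\omega\in\Omega\}$, $I_\Omega=\{p\in\Pi:p(x_\omega)=0\ \forall\omega\in\Omega\}$, $\Upsilon_N=\{\alpha\in\mathbb N_0^s:\prod_j(\alpha_j+1)\le N\}$, and let $A\subset\mathbb N_0^s$ be finite. Define $F_{\Upsilon_N,A}=[f(\alpha+\beta)]_{\alpha\in\Upsilon_N,\beta\in A}$. Then a vector $p=(p_\beta)_{\beta\in A}\in\mathbb C^A$ satisfies $F_{\Upsilon_N,A}\,p=0$ if and only if the polynomial $p(x)=\sum_{\beta\in A}p_\beta x^\beta$ belongs to $I_\Omega\cap\Pi_A$.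
   Context: $\Pi=\mathbb C[x_1,\dots,x_s]$; for $A\subset\mathbb N_0^s$, $\Pi_A$ is the span of the monomials $x^\beta$, $\beta\in A$, and a vector in $\mathbb C^A$ is identified with the polynomial in $\Pi_A$ having these coefficients. Restricting imaginary parts of frequencies to $\mathbb T$ makes the points $x_\omega$, $\omega\in\Omega$, pairwise distinct. *)

(* Defs.v *)
From HB Require Import structures.
From mathcomp Require Import all_boot all_order all_algebra.
From mathcomp Require Import all_classical all_reals all_analysis.
From mathcomp Require Import complex.
Set Implicit Arguments. Unset Strict Implicit. Unset Printing Implicit Defensive.
Import Order.TTheory GRing.Theory Num.Theory.
Local Open Scope ring_scope.

Definition multi (s : nat) := {ffun 'I_s -> nat}.
Definition maddm (s : nat) (a b : multi s) : multi s := [ffun j => a j + b j].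

Definition cexp (R : realType) (z : R[i]) : R[i] :=
  Complex (expR (complex.Re z) * cos (complex.Im z)) (expR (complex.Re z) * sin (complex.Im z)).

Definition freq (R : realType) (s : nat) := {ffun 'I_s -> R[i]}.

(* Omega subset (R + i T)^s, T = R / 2 pi Z represented by [0, 2 pi) *)
Definition in_RiT (R : realType) (s : nat) (w : freq R s) : Prop :=
  forall j : 'I_s, 0 <= complex.Im (w j) /\ complex.Im (w j) < 2 * pi.

Definition expsum (R : realType) (s : nat) (Om : seq (freq R s))
  (fc : freq R s -> R[i]) (x : multi s) : R[i] :=
  \sum_(w <- Om) fc w * cexp (\sum_(j < s) w j * (x j)%:R).

Definition xpt (R : realType) (s : nat) (w : freq R s) : 'I_s -> R[i] :=
  fun j => cexp (w j).

Definition peval (R : realType) (s : nat) (A : seq (multi s))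
  (p : multi s -> R[i]) (y : 'I_s -> R[i]) : R[i] :=
  \sum_(b <- A) p b * \prod_(j < s) y j ^+ b j.

Definition in_Upsilon (s N : nat) (a : multi s) : bool :=
  (\prod_(j < s) (a j).+1 <= N)%N.

(* (F_{Upsilon_N, A} p)_alpha = 0 for every alpha in Upsilon_N *)
Definition hankel_kernel (R : realType) (s : nat) (Om : seq (freq R s))
  (fc : freq R s -> R[i]) (A : seq (multi s)) (p : multi s -> R[i]) : Prop :=
  forall a : multi s, in_Upsilon (size Om) a ->
    \sum_(b <- A) expsum Om fc (maddm a b) * p b = 0.

(* p in I_Omega (membership in Pi_A is built in by construction) *)
Definition in_ideal_Omega (R : realType) (s : nat) (Om : seq (freq R s))
  (A : seq (multi s)) (p : multi s -> R[i]) : Prop :=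
  forall w, w \in Om -> peval A p (xpt w) = 0.

(* Main.v *)
Require Import Defs.
From HB Require Import structures.
From mathcomp Require Import all_boot all_order all_algebra.
From mathcomp Require Import all_classical all_reals all_analysis.
From mathcomp Require Import complex.
Import Order.TTheory GRing.Theory Num.Theory.
Local Open Scope ring_scope.
From mathcomp Require Import ring lra.
Lemma exists_min (T : eqType) (V : seq T) (f : T -> nat) :
  V != [::] -> exists2 t, t \in V & forall u, u \in V -> (f t <= f u)%N.
Proof.
elim: V => [//|v V IH] _.
case: (V =P [::]) => [->|/eqP nV].
  by exists v => [|u]; rewrite ?mem_seq1 ?inE // => /eqP->.
have [t tV tmin] := IH nV.
case: (leqP (f v) (f t)) => h.
  exists v; first by rewrite inE eqxx.
  move=> u; rewrite inE => /orP[/eqP->//|/tmin]; exact: leq_trans.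
exists t; first by rewrite inE tV orbT.
move=> u; rewrite inE => /orP[/eqP->|/tmin//]; exact: ltnW.
Qed.

Lemma sum_count (T U : eqType) (g : T -> U) (X : seq T) :
  (\sum_(t <- undup (map g X)) count (fun x => g x == t) X)%N = size X.
Proof.
under eq_bigr => t _ do rewrite -sum1_count big_mkcond /=.
rewrite exchange_big /= -sum1_size big_seq [RHS]big_seq.
apply: eq_bigr => x xX.
rewrite -big_mkcond /= -big_filter.
have -> : [seq i <- undup [seq g i | i <- X] | g x == i] = [:: g x].
  rewrite (@eq_filter _ _ (pred1 (g x))); last by move=> u /=; rewrite eq_sym.
  by rewrite filter_pred1_uniq ?undup_uniq // mem_undup map_f.
by rewrite big_seq1.
Qed.

Lemma monoS (K : fieldType) s (y : 'I_s -> K) (a : {ffun 'I_s -> nat}) kk i :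
  a kk = 0%N ->
  \prod_(j < s) y j ^+ ([ffun j => if j == kk then i else a j] j)
  = \prod_(j < s) y j ^+ a j * y kk ^+ i.
Proof.
move=> ha; rewrite (bigD1 kk) //= [in RHS](bigD1 kk) //= ffunE eqxx ha expr0 mul1r mulrC.
congr (_ * _); apply: eq_bigr => j /negbTE hj; by rewrite ffunE hj.
Qed.

Lemma prodS s (a : {ffun 'I_s -> nat}) kk i :
  a kk = 0%N ->
  (\prod_(j < s) ([ffun j => if j == kk then i else a j] j).+1
  = i.+1 * \prod_(j < s) (a j).+1)%N.
Proof.
move=> ha; rewrite (bigD1 kk) //= [in RHS](bigD1 kk) //= ffunE eqxx ha mul1n.
congr (_ * _)%N; apply: eq_bigr => j /negbTE hj; by rewrite ffunE hj.
Qed.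

Lemma indep (K : fieldType) (s : nat) (T : eqType) (pt : T -> 'I_s -> K) (k : nat) :
  (k <= s)%N ->
  forall (X : seq T) (n : nat) (c : T -> K), uniq X ->
  (forall x y, x \in X -> y \in X -> x != y ->
     exists j : 'I_s, (j < k)%N && (pt x j != pt y j)) ->
  (size X <= n)%N ->
  (forall a : {ffun 'I_s -> nat}, (forall j : 'I_s, (k <= j)%N -> a j = 0%N) ->
     (\prod_(j < s) (a j).+1 <= n)%N ->
     \sum_(x <- X) c x * \prod_(j < s) pt x j ^+ a j = 0) ->
  forall x, x \in X -> c x = 0.
Proof.
elim: k => [|k IHk] ks X n c uX dX sXn H x xX.
  have := H [ffun=> 0%N] (fun j _ => ffunE (fun=> 0%N) j).
  have Z : \sum_(y <- rem x X) c y * \prod_(j < s) pt y j ^+ [ffun=> 0%N] j = 0.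
    apply: big1_seq => y /andP[_ yr].
    move: yr; rewrite (mem_rem_uniq _ uX) inE => /andP[yx yX].
    by have [j /andP[]] := dX y x yX xX yx.
  rewrite (big_rem x xX) /= Z addr0.
  under eq_bigr => j _ do rewrite ffunE.
  rewrite big1_eq.
  under eq_bigr => j _ do rewrite ffunE expr0.
  rewrite big1_eq mulr1; apply.
  by apply: leq_trans sXn; case: X xX {uX dX H Z}.
have kks : (k < s)%N by [].
pose kk := Ordinal kks.
pose g := fun y => pt y kk.
move: {2}(size X) (leqnn (size X)) => L.
elim: L X n c uX dX sXn H x xX => [|L IHL] X n c uX dX sXn H x xX.
  by rewrite leqn0 => /nilP X0; move: xX; rewrite X0.
move=> sXL.
pose V := undup (map g X).
have V0 : V != [::].
  by apply/eqP => V0; have := map_f g xX; rewrite -mem_undup -/V V0.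
pose cnt := fun t => count (fun y => g y == t) X.
have [t tV tmin] := @exists_min _ _ cnt V0.
pose ng := cnt t.
pose m := size V.
have hm : (m * ng <= size X)%N.
  rewrite -(@sum_count _ _ g X) -/V.
  have -> : (m * ng = \sum_(u <- V) ng)%N.
    by rewrite big_const_seq count_predT iter_addn_0 mulnC.
  by rewrite big_seq [X in (_ <= X)%N]big_seq; apply: leq_sum => u uV; apply: tmin.
pose r := \prod_(u <- V | u != t) ('X - u%:P) : {poly K}.
have sr : size r = m.
  rewrite /r -big_filter size_prod_XsubC.
  have uV : uniq V by apply: undup_uniq.
  rewrite -(rem_filter t uV) size_rem // /m.
  by case: (V) V0.
have rt : r.[t] != 0.
  rewrite /r horner_prod prodf_seq_neq0; apply/allP => u _; apply/implyP => ut.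
  by rewrite hornerXsubC subr_eq0 eq_sym.
have rz : forall u, u \in V -> u != t -> r.[u] = 0.
  move=> u uV ut; rewrite /r (big_rem u uV) /= ut hornerM hornerXsubC subrr mul0r //.
have hG : forall a' : {ffun 'I_s -> nat}, (forall j : 'I_s, (k <= j)%N -> a' j = 0%N) ->
    (\prod_(j < s) (a' j).+1 <= ng)%N ->
    \sum_(y <- X | g y == t) c y * \prod_(j < s) pt y j ^+ a' j = 0.
  move=> a' ha' hp.
  have a'k : a' kk = 0%N by apply: ha'.
  have E : \sum_(y <- X) c y * \prod_(j < s) pt y j ^+ a' j * r.[g y] = 0.
    under eq_bigr => y _ do rewrite horner_coef mulr_sumr.
    rewrite exchange_big /= big1 // => i _.
    apply: (@eq_trans _ _ (r`_i * \sum_(y <- X) c y * \prod_(j < s) pt y j ^+ [ffun j => if j == kk then val i else a' j] j)).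
      rewrite mulr_sumr; apply: eq_bigr => y _.
      rewrite monoS // /g; ring.
    rewrite H ?mulr0 //.
    + move=> j hj; rewrite ffunE.
      have -> : (j == kk) = false.
        by apply/negbTE; apply/eqP => ejk; move: hj; rewrite ejk /=; rewrite ltnn.
      by apply: ha'; apply: ltnW.
    + rewrite prodS //; apply: leq_trans (leq_trans hm sXn).
      by apply: leq_mul; [rewrite -sr ltn_ord | exact: hp].
  rewrite (bigID (fun y => g y == t)) /= [X in _ + X]big1_seq ?addr0 in E.
    apply/eqP; rewrite -(mulIr_eq0 _ (mulIf rt)); apply/eqP.
    rewrite -[RHS]E mulr_suml; apply: eq_bigr => y /eqP <-; by [].
  move=> y /andP[gyt yX]; rewrite rz ?mulr0 //.
  by rewrite mem_undup map_f.
have hc0 : forall y, y \in X -> g y == t -> c y = 0.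
  move=> y yX gyt.
  apply: (IHk (ltnW ks) (seq.filter (fun y => g y == t) X) ng c).
  - by rewrite filter_uniq.
  - move=> x1 y1; rewrite !mem_filter => /andP[g1 x1X] /andP[g2 y1X] xy.
    have [j /andP[jk pj]] := dX x1 y1 x1X y1X xy.
    exists j; rewrite pj andbT.
    rewrite ltnS leq_eqVlt in jk; case/orP: jk => [/eqP jk|//].
    have ejk : j = kk by apply: val_inj.
    have e1 : pt x1 kk = t := eqP g1. have e2 : pt y1 kk = t := eqP g2.
    by move: pj; rewrite ejk e1 e2 eqxx.
  - by rewrite size_filter.
  - by move=> a ha hp; rewrite big_filter; apply: hG.
  - by rewrite mem_filter gyt.
have [gxt|gxt] := boolP (g x == t); first exact: hc0.
apply: (IHL (seq.filter (fun y => g y != t) X) n c).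
- by rewrite filter_uniq.
- move=> x1 y1; rewrite !mem_filter => /andP[_ x1X] /andP[_ y1X] xy.
  exact: dX.
- by apply: leq_trans sXn; rewrite size_filter count_size.
- move=> a ha hp; rewrite big_filter.
  have := H a ha hp; rewrite (bigID (fun y => g y == t)) /= big1_seq ?add0r //.
  by move=> y /andP[gyt yX]; rewrite hc0 ?mul0r.
- by rewrite mem_filter gxt.
- rewrite -ltnS; apply: leq_trans sXL.
  rewrite size_filter -(count_predC (fun y => g y == t) X) addnC -addn1.
  apply: leq_add; first exact: leqnn.
  have : t \in V := tV.
  rewrite mem_undup => /mapP[y yX ety]; rewrite -has_count; apply/hasP; exists y => //.
  by rewrite ety.
Qed.
Lemma cexpD (R : realType) (a b : R[i]) : cexp (a + b) = cexp a * cexp b.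
Proof.
case: a => a1 a2; case: b => b1 b2.
rewrite /cexp /= expRD cosD sinD.
apply/eqP; rewrite eq_complex /=; apply/andP; split; apply/eqP; ring.
Qed.

Lemma cexp0 (R : realType) : cexp (0 : R[i]) = 1.
Proof. by rewrite /cexp /= expR0 cos0 sin0 mulr1 mulr0. Qed.

Lemma cexpMn (R : realType) (a : R[i]) n : cexp (a * n%:R) = cexp a ^+ n.
Proof.
elim: n => [|n IH]; first by rewrite mulr0 cexp0.
by rewrite -addn1 natrD mulrDr mulr1 cexpD IH exprD expr1.
Qed.

Lemma sin_eq0_pi (R : realType) (x : R) : - pi < x < pi -> sin x = 0 -> x = 0.
Proof.
move=> /andP[h1 h2] sx.
case: (ltgtP x 0) => // hx.
  have : 0 < sin (- x) by apply: sin_gt0_pi; apply/andP; split; lra.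
  by rewrite sinN sx oppr0 ltxx.
have : 0 < sin x by apply: sin_gt0_pi; apply/andP; split; lra.
by rewrite sx ltxx.
Qed.

Lemma cexp_inj (R : realType) (a b : R[i]) :
  0 <= complex.Im a < 2 * pi -> 0 <= complex.Im b < 2 * pi ->
  cexp a = cexp b -> a = b.
Proof.
case: a => a1 a2; case: b => b1 b2 /= /andP[ha1 ha2] /andP[hb1 hb2] E.
have E1 := congr1 (@complex.Re R) E; have E2 := congr1 (@complex.Im R) E.
rewrite /cexp /= in E1 E2.
have ea : expR a1 = expR b1.
  have : expR a1 ^+ 2 = expR b1 ^+ 2.
    have L : forall e u : R, (e * cos u) ^+ 2 + (e * sin u) ^+ 2 = e ^+ 2.
      by move=> e u; rewrite !exprMn -mulrDr cos2Dsin2 mulr1.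
    by rewrite -(L (expR a1) a2) -(L (expR b1) b2) E1 E2.
  move/eqP; rewrite eqf_sqr => /orP[/eqP //|/eqP h].
  have := expR_gt0 a1; have := expR_gt0 b1; rewrite h; lra.
have e1 := expR_inj ea.
have n0 : expR a1 != 0 by rewrite gt_eqF ?expR_gt0.
have c : cos a2 = cos b2 by apply: (mulfI n0); rewrite E1 ea.
have s : sin a2 = sin b2 by apply: (mulfI n0); rewrite E2 ea.
have cd : cos (a2 - b2) = 1.
  by rewrite cosD cosN sinN c s mulrN opprK -!expr2 cos2Dsin2.
pose x := (a2 - b2) / 2.
have sx : sin x = 0.
  have : cos (x + x) = 1 by rewrite /x -splitr.
  rewrite cosD => h.
  have : sin x ^+ 2 = 0.
    have := cos2Dsin2 x; rewrite !expr2; lra.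
  by move/eqP; rewrite sqrf_eq0 => /eqP.
have x0 : x = 0.
  apply: sin_eq0_pi sx; rewrite /x; apply/andP; split; lra.
have : a2 = b2 by move: x0; rewrite /x; lra.
by move=> ->; rewrite e1.
Qed.

Lemma cexp_sum (R : realType) s (F : 'I_s -> R[i]) :
  cexp (\sum_(j < s) F j) = \prod_(j < s) cexp (F j).
Proof. exact: (big_morph _ (@cexpD R) (@cexp0 R)). Qed.

Lemma key (R : realType) (s : nat) (Om : seq (freq R s))
  (fc : freq R s -> R[i]) (A : seq (multi s)) (p : multi s -> R[i]) (a : multi s) :
  \sum_(b <- A) expsum Om fc (maddm a b) * p b =
  \sum_(w <- Om) (fc w * peval A p (xpt w)) * \prod_(j < s) xpt w j ^+ a j.
Proof.
rewrite /expsum /peval.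
under eq_bigr => b _ do rewrite mulr_suml.
rewrite exchange_big /=; apply: eq_bigr => w _.
rewrite mulr_sumr mulr_suml; apply: eq_bigr => b _.
rewrite cexp_sum.
have -> : \prod_(j < s) cexp (w j * ((maddm a b) j)%:R) =
   \prod_(j < s) xpt w j ^+ a j * \prod_(j < s) xpt w j ^+ b j.
  rewrite -big_split /=; apply: eq_bigr => j _.
  by rewrite ffunE cexpMn exprD.
ring.
Qed.

Theorem theorem28 (R : realType) (s : nat) (Om : seq (freq R s))
  (fc : freq R s -> R[i]) (A : seq (multi s)) :
  uniq Om ->
  (forall w, w \in Om -> in_RiT w) ->
  (forall w, w \in Om -> fc w != 0) ->
  uniq A ->
  forall p : multi s -> R[i],
    hankel_kernel Om fc A p <-> in_ideal_Omega Om A p.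
Proof.
move=> uOm hRiT hfc uA p; split.
  move=> hk w wOm.
  have D : forall x y, x \in Om -> y \in Om -> x != y ->
      exists j : 'I_s, (j < s)%N && (xpt x j != xpt y j).
    move=> x y xO yO xy.
    case: (boolP [exists j, xpt x j != xpt y j]) => [/existsP[j hj]|].
      by exists j; rewrite hj ltn_ord.
    rewrite negb_exists => /forallP hall.
    move/negP: xy; case; apply/eqP/ffunP => j.
    have := hall j; rewrite negbK => /eqP.
    by apply: cexp_inj; [case: (hRiT x xO j) => -> -> | case: (hRiT y yO j) => -> ->].
  have Hy : forall a : {ffun 'I_s -> nat}, (forall j : 'I_s, (s <= j)%N -> a j = 0%N) ->
     (\prod_(j < s) (a j).+1 <= size Om)%N ->
     \sum_(x <- Om) (fc x * peval A p (xpt x)) * \prod_(j < s) xpt x j ^+ a j = 0.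
    by move=> a _ ha; rewrite -key; apply: hk.
  have := @indep _ s _ (@xpt R s) s (leqnn s) Om (size Om)
    (fun w => fc w * peval A p (xpt w)) uOm D (leqnn _) Hy w wOm.
  by move/eqP; rewrite mulf_eq0 (negbTE (hfc w wOm)) /= => /eqP.
move=> hi a _; rewrite key big1_seq // => w /andP[_ wOm].
by rewrite (hi w wOm) mulr0 mul0r.
Qed.
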